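(* Let $k\ge 2$ and $X=J(2k,k,1)\cup J(2k,k,2)\cup\cdots\cup J(2k,k,k-1)$. If $\binom{2k}{k}\equiv 0\pmod 4$, then for every vertex $A$ of $X$ there is perfect state transfer from $A$ to $\{1,\ldots,2k\}\setminus A$ at time $\pi/2$.
   Context: $J(2k,k,i)$ is the graph on the $k$-subsets of $\{1,\ldots,2k\}$ with $A\sim B$ iff $|A\cap B|=i$; the union of several such graphs is the graph on the same vertex set whose edge set is the union of their edge sets. For a simple graph $X$ with adjacency matrix $A$, let $\mathcal{H}_X(t)=e^{itA}$; there is perfect state transfer from $u$ to $v\ne u$ at time $\tau$ if $|\mathcal{H}_X(\tau)_{u,v}|=1$. *)

(* Defs.v *)
From Stdlib Require Import Reals Factorial.
From mathcomp Require Import all_boot.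
Set Implicit Arguments. Unset Strict Implicit. Unset Printing Implicit Defensive.

(* Vertices of J(2k,k,i): the k-subsets of {1,...,2k} (modelled as 'I_(2k)). *)
Definition vert (k : nat) := {A : {set 'I_(2 * k)} | #|A| == k}.

(* Adjacency in X = J(2k,k,1) u ... u J(2k,k,k-1): 1 <= |A n B| <= k-1. *)
Definition adjX (k : nat) (A B : vert k) : bool :=
  (0 < #|val A :&: val B|) && (#|val A :&: val B| < k).

(* walks k m u v = (A^m)_{u,v}, A the adjacency matrix of X. *)
Fixpoint walks (k m : nat) (u v : vert k) {struct m} : nat :=
  match m with
  | 0 => nat_of_bool (u == v)
  | m'.+1 => \sum_(w : vert k) nat_of_bool (adjX u w) * @walks k m' w v
  end.

Open Scope R_scope.

Definition ipow_re (n : nat) : R :=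
  match (n mod 4)%nat with 0%nat => 1 | 2%nat => -1 | _ => 0 end.
Definition ipow_im (n : nat) : R :=
  match (n mod 4)%nat with 1%nat => 1 | 3%nat => -1 | _ => 0 end.

(* H_X(t)_{u,v} = (e^{itA})_{u,v} = sum_n (it)^n (A^n)_{u,v} / n!,
   given by its real part re and imaginary part im. *)
Definition transition_entry (k : nat) (t : R) (u v : vert k) (re im : R) : Prop :=
  infinite_sum (fun n => ipow_re n * t ^ n / INR (fact n) * INR (@walks k n u v)) re /\
  infinite_sum (fun n => ipow_im n * t ^ n / INR (fact n) * INR (@walks k n u v)) im.

Definition pst (k : nat) (u v : vert k) (t : R) : Prop :=
  u <> v /\ exists re im, @transition_entry k t u v re im /\ re ^ 2 + im ^ 2 = 1.

(* Main.v *)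
Require Import Defs.
From Stdlib Require Import Reals Factorial Lia Lra.
From Coquelicot Require Import Coquelicot.
Open Scope R_scope.
Lemma ipow_4 m : ((m + 4) mod 4 = m mod 4)%nat.
Proof. replace (m+4)%nat with (m + 1*4)%nat by lia. apply Nat.Div0.mod_add. Qed.
Definition Pw n := ipow_re (2*n) = (-1)^n /\ ipow_re (2*n+1) = 0 /\
   ipow_im (2*n) = 0 /\ ipow_im (2*n+1) = (-1)^n.
Lemma ipow_facts n : Pw n.
Proof.
 assert (H : forall n, Pw n /\ Pw (S n)).
 { induction n0 as [|n0 [IH0 IH1]].
   - split; unfold Pw, ipow_re, ipow_im; simpl; repeat split; ring.
   - split; [exact IH1|]. unfold Pw in *.
     replace (2 * S (S n0) + 1)%nat with (2*n0 + 1 + 4)%nat by lia.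
     replace (2 * S (S n0))%nat with (2*n0 + 4)%nat by lia.
     unfold ipow_re, ipow_im in *. rewrite !ipow_4.
     replace ((-1)^(S (S n0))) with ((-1)^n0) by (simpl; ring). exact IH0. }
 apply H.
Qed.
Lemma pown (x : R) n : pow_n (K:=R_AbsRing) x n = x ^ n.
Proof. induction n; simpl; [reflexivity| rewrite IHn; reflexivity]. Qed.
Lemma pser_inf (a : nat -> R) (x l : R) : is_pseries a x l <-> infinite_sum (fun n => a n * x ^ n) l.
Proof. rewrite <- is_series_Reals. unfold is_pseries. split; apply is_series_ext; intro n;
 change (scal (pow_n x n) (a n)) with (Rmult (pow_n (K:=R_AbsRing) x n) (a n)); rewrite (pown x n).
 - change (x ^ n * a n = a n * x ^ n :> R). ring.
 - change (a n * x ^ n = x ^ n * a n :> R). ring. Qed.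
Lemma inf_plus a b la lb : infinite_sum a la -> infinite_sum b lb -> infinite_sum (fun n => a n + b n) (la+lb).
Proof. rewrite <- !is_series_Reals. intros Ha Hb. exact (is_series_plus (V:=R_NormedModule) _ _ _ _ Ha Hb). Qed.
Lemma inf_scal c a l : infinite_sum a l -> infinite_sum (fun n => c * a n) (c*l).
Proof. rewrite <- !is_series_Reals. intros Ha. exact (is_series_scal (K:=R_AbsRing) (V:=R_NormedModule) c _ _ Ha). Qed.
Lemma inf_ext a b l : (forall n, a n = b n) -> infinite_sum a l -> infinite_sum b l.
Proof. rewrite <- !is_series_Reals. intros; eapply is_series_ext; eauto. Qed.
Lemma inf_zero : infinite_sum (fun _ => 0) 0.
Proof. intros e He. exists 0%nat. intros n _. rewrite sum_cte. unfold R_dist.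
  replace (0 * INR (S n) - 0) with 0 by ring. rewrite Rabs_R0. exact He. Qed.
Lemma fact_nz n : INR (fact n) <> 0.
Proof. apply not_0_INR, fact_neq_0. Qed.
Lemma cos_ser x : infinite_sum (fun n => ipow_re n * x^n / INR (fact n)) (cos x).
Proof.
  set (a := fun n => ipow_re n / INR (fact n)).
  assert (H : is_pseries a x (cos x + x * 0)).
  { apply is_pseries_odd_even.
    - apply pser_inf. unfold cos. destruct (exist_cos (Rsqr x)) as [l Hl].
      unfold cos_in in Hl. eapply inf_ext; [|exact Hl]. intro n.
      unfold a, cos_n. destruct (ipow_facts n) as [-> _]. unfold Rsqr.
      replace (x^2) with (x*x) by ring. field. apply fact_nz.
    - apply pser_inf. eapply inf_ext; [|exact inf_zero]. intro n.
      unfold a. destruct (ipow_facts n) as [_ [-> _]]. field. apply fact_nz. }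
  rewrite Rmult_0_r, Rplus_0_r in H. apply pser_inf in H.
  eapply inf_ext; [|exact H]. intro n. unfold a. field. apply fact_nz.
Qed.
Lemma sin_ser x : infinite_sum (fun n => ipow_im n * x^n / INR (fact n)) (sin x).
Proof.
  set (a := fun n => ipow_im n / INR (fact n)).
  unfold sin. destruct (exist_sin (Rsqr x)) as [l Hl].
  assert (H : is_pseries a x (0 + x * l)).
  { apply is_pseries_odd_even. 
    - apply pser_inf. eapply inf_ext; [|exact inf_zero]. intro n.
      unfold a. destruct (ipow_facts n) as [_ [_ [-> _]]]. field. apply fact_nz.
    - apply pser_inf. 
      unfold sin_in in Hl. eapply inf_ext; [|exact Hl]. intro n.
      unfold a, sin_n. destruct (ipow_facts n) as [_ [_ [_ ->]]]. unfold Rsqr.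
      replace (x^2) with (x*x) by ring. field. apply fact_nz. }
  rewrite Rplus_0_l in H. apply pser_inf in H.
  eapply inf_ext; [|exact H]. intro n. unfold a. field. apply fact_nz.
Qed.

Ltac sring := ring.
Ltac sfield := field.
From mathcomp Require Import all_boot ssralg ssrnum Rstruct ring.
Set Implicit Arguments. Unset Strict Implicit. Unset Printing Implicit Defensive.
Import GRing.Theory Num.Theory.
Section Comb.
Local Open Scope nat_scope.

Lemma compl_card k (A : vert k) : #|~: val A| == k.
Proof. by rewrite cardsCs card_ord setCK (eqP (valP A)) mul2n -addnn addnK. Qed.
Definition compl k (A : vert k) : vert k := exist _ (~: val A) (compl_card A).
Lemma complK k (A : vert k) : compl (compl A) = A.
Proof. by apply: val_inj; rewrite /= setCK. Qed.

Lemma sub_card_eq (T : finType) (S U : {set T}) : S \subset U -> #|U| <= #|S| -> S = U.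
Proof. move=> sSU leUS; apply/eqP; rewrite eqEcard sSU leUS. done. Qed.

Lemma adjXE k (u w : vert k) : adjX u w = (w != compl u) && (w != u).
Proof.
rewrite /adjX.
have cu : #|val u| = k := eqP (valP u).
have cw : #|val w| = k := eqP (valP w).
have le : #|val u :&: val w| <= k by rewrite -[X in _ <= X]cu; apply: subset_leq_card; exact: subsetIl.
congr andb.
- rewrite lt0n cards_eq0; apply/idP/idP.
  + move=> nz; apply/eqP => E; move/negP: nz; apply.
    rewrite E /=; apply/eqP; exact: setICr.
  + apply: contraNN => /eqP I0; apply/eqP/val_inj => /=.
    apply: sub_card_eq. 
      by rewrite -disjoints_subset -setI_eq0 setIC I0.
    by rewrite cw (eqP (compl_card u)).
- rewrite ltn_neqAle le andbT; apply/idP/idP.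
  + apply: contraNN => /eqP ->; by rewrite setIid cu.
  + apply: contraNN => /eqP I; apply/eqP/val_inj => /=.
    have : val u :&: val w = val u.
      by apply: sub_card_eq; rewrite ?subsetIl // I cu.
    move/setIidPl => suw; apply/esym/sub_card_eq => //.
    by rewrite cu cw.
Qed.

Lemma u_neq_cu k (hk : 0 < k) (u : vert k) : u != compl u.
Proof.
apply/eqP => E.
have : val u = ~: val u by rewrite {1}E.
move=> E2.
have : val u :&: val u = set0 by rewrite {2}E2 setICr.
rewrite setIid => /eqP; rewrite -cards_eq0 (eqP (valP u)) => /eqP k0.
by rewrite k0 in hk.
Qed.

Local Open Scope ring_scope.

Lemma sum2 k (hk : (0 < k)%N) (u : vert k) (g : vert k -> R) :
  \sum_w g w = g u + g (compl u) + \sum_(w | (w != u) && (w != compl u)) g w.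
Proof.
rewrite (bigD1 u) //= (bigD1 (compl u)) /=; last by rewrite eq_sym u_neq_cu.
by rewrite addrA.
Qed.

Lemma sum_adj k (hk : (0 < k)%N) (u : vert k) (f : vert k -> R) :
  \sum_w (adjX u w)%:R * f w = \sum_w f w - f u - f (compl u).
Proof.
rewrite [LHS](sum2 hk u) [in RHS](sum2 hk u).
rewrite !adjXE eqxx /= andbF eqxx /= !mul0r !add0r.
have -> : \sum_(i | (i != u) && (i != compl u)) (adjX u i)%:R * f i =
          \sum_(i | (i != u) && (i != compl u)) f i.
  apply: eq_bigr => w /andP [h1 h2]; by rewrite adjXE h1 h2 mul1r.
ring.
Qed.

Definition dd k (x y : vert k) : R := (x == y)%:R.

Lemma sum_d k (v : vert k) : \sum_w dd w v = 1.
Proof.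
rewrite (bigD1 v) //= /dd eqxx big1 ?addr0 // => w /negPf -> //.
Qed.

Lemma sum_dc k (v : vert k) : \sum_w dd (compl w) v = 1.
Proof.
rewrite (bigD1 (compl v)) //= /dd complK eqxx big1 ?addr0 // => w hw.
case: eqP => // E; move: hw; by rewrite -E complK eqxx.
Qed.

Lemma walksE k (hk : (0 < k)%N) n (u v : vert k) :
  let N := (#|{: vert k}|%:R : R) in
  (walks n u v)%:R * (2 * N) = 2 * (N - 2) ^+ n + (-2) ^+ n * (N * (dd u v + dd (compl u) v) - 2)
     + N * 0 ^+ n * (dd u v - dd (compl u) v).
Proof.
move=> N.
elim: n u v => [|n IH] u v.
  rewrite /= !expr0 /dd. ring.
rewrite /= natr_sum mulr_suml.
under eq_bigr => w _ do rewrite natrM -mulrA IH.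
rewrite sum_adj //.
set a := 2 * (N - 2) ^+ n - 2 * (-2) ^+ n.
set b := (-2) ^+ n * N + N * 0 ^+ n.
set c := (-2) ^+ n * N - N * 0 ^+ n.
have -> : \sum_w (2 * (N - 2) ^+ n + (-2) ^+ n * (N * (dd w v + dd (compl w) v) - 2)
     + N * 0 ^+ n * (dd w v - dd (compl w) v)) = N * a + b + c.
  have gE : forall w, 2 * (N - 2) ^+ n + (-2) ^+ n * (N * (dd w v + dd (compl w) v) - 2)
     + N * 0 ^+ n * (dd w v - dd (compl w) v) = a + b * dd w v + c * dd (compl w) v.
    move=> w; rewrite /a /b /c; ring.
  rewrite (eq_bigr _ (fun w _ => gE w)).
  rewrite big_split /= big_split /= -!mulr_sumr sum_d sum_dc sumr_const -mulr_natl.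
  rewrite /N !mulr1. done.
rewrite complK /a /b /c !exprS. ring.
Qed.

Lemma card_vert k : #|{: vert k}| = 'C(2 * k, k).
Proof. by rewrite card_sig -cardsE card_draws card_ord. Qed.

End Comb.
Local Open Scope R_scope.
Lemma walks_AB k (hk : (0 < k)%N) (A B : vert k) (hB : val B = ~: val A) n :
  INR (walks n A B) * (2 * INR 'C((2 * k)%N, k)) = 2 * (INR 'C((2 * k)%N, k) - 2)^n
     + (-2)^n * (INR 'C((2 * k)%N, k) - 2) - INR 'C((2 * k)%N, k) * 0^n.
Proof.
have eB : B = compl A by apply: val_inj.
have := walksE hk n A B.
rewrite /= eB /dd eqxx (negbTE (u_neq_cu hk A)) card_vert => H.
move: H; rewrite -!INRE -!RpowE -?RplusE -?RmultE -?RminusE -?RoppE => H. simpl INR in H.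
transitivity (INR (walks n A (compl A)) * ((1 + 1) * INR 'C(2 * k, k))); first by sring.
rewrite H. have z0 : forall m, pow (GRing.zero : R) m = pow (IZR Z0) m by []. rewrite z0.
set C := INR _.
replace (C + - (1 + 1)) with (C - 2) by sring.
replace (- (1 + 1)) with (-2) by sring.
sring.
Qed.

Theorem mainTheorem18 (k : nat) (hk : (2 <= k)%N) (hbin : ('C(2 * k, k) %% 4)%N = 0%N)
  (A B : vert k) (hB : val B = ~: val A) :
  pst A B (PI / 2)%R.
Proof.
have hk1 : (0 < k)%N by apply: leq_trans hk.
have eB : B = compl A by apply: val_inj.
have Cpos : (0 < 'C((2 * k)%N, k))%N by rewrite bin_gt0 leq_pmull.
have [j Cj] : exists j, 'C((2 * k)%N, k) = (4 * j)%N.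
  by exists ('C((2 * k)%N, k) %/ 4)%N; rewrite {1}(divn_eq 'C((2 * k)%N, k) 4) hbin addn0 mulnC.
have W := walks_AB hk1 hB.
set N := INR 'C((2 * k)%N, k) in W.
have Npos : N <> 0.
  apply: not_0_INR => E; by rewrite E in Cpos.
have NE : N = 4 * INR j.
  rewrite /N Cj (_ : (4 * j)%N = Nat.mul 4 j) // mult_INR.
  by rewrite (_ : INR 4 = 4) //; simpl; sring.
split.
  move=> E; move: (u_neq_cu hk1 A); by rewrite {1}E eB eqxx.
exists (-1), 0; split; last by sring.
split.
- have S := inf_plus _ _ _ _ (inf_scal (1/N) _ _ (cos_ser ((N-2)*(PI/2))))
     (inf_plus _ _ _ _ (inf_scal ((N-2)/(2*N)) _ _ (cos_ser (-2*(PI/2))))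
               (inf_scal (-1/2) _ _ (cos_ser (0*(PI/2))))).
  have c1 : cos ((N-2)*(PI/2)) = -1.
    rewrite NE (_ : (4 * INR j - 2) * (PI / 2) = - PI + 2 * INR j * PI); last by sfield.
    by rewrite cos_period cos_neg cos_PI.
  have c2 : cos (-2*(PI/2)) = -1.
    by rewrite (_ : -2 * (PI / 2) = - PI) ?cos_neg ?cos_PI //; sfield.
  have c3 : cos (0*(PI/2)) = 1 by rewrite Rmult_0_l cos_0.
  rewrite c1 c2 c3 in S.
  rewrite (_ : -1 = 1 / N * -1 + ((N - 2) / (2 * N) * -1 + -1 / 2 * 1)); last by sfield.
  eapply inf_ext; [|exact S] => n /=.
  have Wn : INR (walks n A B) = (2*(N-2)^n + (-2)^n*(N-2) - N*0^n) / (2*N).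
    by rewrite -W; sfield.
  rewrite Wn !Rpow_mult_distr. sfield. split; [exact: Npos | exact: fact_nz].
- have S := inf_plus _ _ _ _ (inf_scal (1/N) _ _ (sin_ser ((N-2)*(PI/2))))
     (inf_plus _ _ _ _ (inf_scal ((N-2)/(2*N)) _ _ (sin_ser (-2*(PI/2))))
               (inf_scal (-1/2) _ _ (sin_ser (0*(PI/2))))).
  have c1 : sin ((N-2)*(PI/2)) = 0.
    rewrite NE (_ : (4 * INR j - 2) * (PI / 2) = - PI + 2 * INR j * PI); last by sfield.
    by rewrite sin_period sin_neg sin_PI Ropp_0.
  have c2 : sin (-2*(PI/2)) = 0.
    by rewrite (_ : -2 * (PI / 2) = - PI) ?sin_neg ?sin_PI ?Ropp_0 //; sfield.
  have c3 : sin (0*(PI/2)) = 0 by rewrite Rmult_0_l sin_0.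
  rewrite c1 c2 c3 in S.
  rewrite (_ : 0 = 1 / N * 0 + ((N - 2) / (2 * N) * 0 + -1 / 2 * 0)); last by sfield.
  eapply inf_ext; [|exact S] => n /=.
  have Wn : INR (walks n A B) = (2*(N-2)^n + (-2)^n*(N-2) - N*0^n) / (2*N).
    by rewrite -W; sfield.
  rewrite Wn !Rpow_mult_distr. sfield. split; [exact: Npos | exact: fact_nz].
Qed.
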